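(* Let $n \geq 1$ and consider sites $v_1,\ldots,v_n$ with uplink capacities $C_u(v_k)>0$ and downlink capacities $C_d(v_k)>0$, and client data streams $s_1,\ldots,s_n$ with rates $R_1,\ldots,R_n>0$ that are sustainable, i.e. (1) $R_i \leq C_u(v_i)$ for every $i$; (2) $\sum_{j\neq i} R_j \leq C_d(v_i)$ for every $i$; (3) $(n-1)\sum_{i=1}^n R_i \leq \sum_{i=1}^n C_u(v_i)$. Then there exists a partitioning scheme for each client data stream, i.e. nonnegative reals $r_{i,j}$ ($1\le i,j\le n$) with $\sum_{j=1}^n r_{i,j}=R_i$ for every $i$, together with, for every pair $(i,j)$, a broadcast tree $T_{i,j}$ for the sub-stream $s_{i,j}$ (a rooted spanning tree on $\{v_1,\ldots,v_n\}$ with root $v_i$), such that: (a) each sub-stream can be broadcast at its rate without violating downlink and uplink bandwidth constraints at any site, i.e. for every $k$, $$\sum_{i=1}^n\sum_{j=1}^n r_{i,j}\, c_{T_{i,j}}(v_k) \leq C_u(v_k) \quad\text{and}\quad \sum_{i\neq k}\sum_{j=1}^n r_{i,j} \leq C_d(v_k),$$ where $c_T(u)$ denotes the number of children of $u$ in the rooted tree $T$; (b) the height of each tree $T_{i,j}$ is at most $2$.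
   Context: Network model: $n$ sites $v_1,\ldots,v_n$ are pairwise connected through a congestion-free core (complete graph); each site $v$ has an uplink bandwidth $C_u(v)>0$ and a downlink bandwidth $C_d(v)>0$. A unicast transmission at rate $r$ from one site to another consumes $r$ of the sender's uplink bandwidth and $r$ of the receiver's downlink bandwidth; these are shared among all transmissions involving the site. Site $v_i$ has a client data stream $s_i$ of rate $R_i$ that must be received by all other sites; the client stream arriving at $v_i$ does not consume $v_i$'s downlink bandwidth. Rates can be split at any granularity: a partitioning scheme splits $s_i$ into $n$ sub-streams $s_{i,1},\ldots,s_{i,n}$ with rates $r_{i,1},\ldots,r_{i,n}$ summing to $R_i$. A sub-stream of $s_i$ is broadcast along a rooted spanning tree rooted at $v_i$: each node forwards the sub-stream to each of its children at the sub-stream's rate, so a node with $c$ children uses $c$ times the rate of its uplink, and each non-root node uses the rate of its downlink. The height of a rooted tree is the maximum number of edges on a path from the root to a leaf. *)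

(* Defs.v *)
From mathcomp Require Import all_boot all_order all_algebra.
Set Implicit Arguments. Unset Strict Implicit. Unset Printing Implicit Defensive.
Import Order.TTheory GRing.Theory Num.Theory.

(* A rooted tree on the sites 'I_n is represented by its parent function
   [par : 'I_n -> 'I_n]; the root is its own parent. *)

(* [par] is a rooted spanning tree on 'I_n with root [root]:
   the root is its own parent and every site reaches the root by
   following parents (hence the root is the only fixed point, there are
   no cycles, and the edges {v, par v}, v <> root, form a spanning tree). *)
Definition rooted_spanning_tree (n : nat) (root : 'I_n) (par : 'I_n -> 'I_n) : Prop :=
  par root = root /\ forall v : 'I_n, exists k : nat, iter k par v = root.

Definition nchildren (n : nat) (root : 'I_n) (par : 'I_n -> 'I_n) (u : 'I_n) : nat :=
  #|[set v : 'I_n | (v != root) && (par v == u)]|.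

(* height at most h: every site is at distance at most h from the root
   (iterating the parent of the root stays at the root). *)
Definition height_le (n : nat) (root : 'I_n) (par : 'I_n -> 'I_n) (h : nat) : Prop :=
  forall v : 'I_n, iter h par v = root.

(* Main.v *)
Require Import Defs.
From mathcomp Require Import all_boot all_order all_algebra.
From mathcomp Require Import reals.
From mathcomp Require Import lra.
Set Warnings "-notation-overridden,-ambiguous-paths".
Import Order.TTheory GRing.Theory Num.Theory.
Local Open Scope ring_scope.
Definition Tr {n : nat} (i j v : 'I_n) : 'I_n :=
  if v == i then i else if j == i then i else if v == j then i else j.

Lemma Tr_height {n} (i j : 'I_n) : height_le i (Tr i j) 2.
Proof.
move=> v; rewrite /= /Tr.
case: (v =P i) => [_|/eqP vi]; rewrite ?eqxx //=.
case: (j =P i) => [_|/eqP ji]; rewrite ?eqxx //=.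
case: (v =P j) => [_|/eqP vj]; rewrite ?eqxx //=.
by case: (j == i).
Qed.

Lemma Tr_tree {n} (i j : 'I_n) : rooted_spanning_tree i (Tr i j).
Proof.
split; first by rewrite /Tr eqxx.
move=> v; exists 2%N; exact: Tr_height.
Qed.

Lemma nch_ne {n} (i j k : 'I_n) : i != k ->
  nchildren i (Tr i j) k = if j == k then (n - 2)%N else 0%N.
Proof.
move=> ik; rewrite /nchildren /Tr.
have [jk|jk] := eqVneq j k.
  subst k.
  have ji : j != i by rewrite eq_sym.
  rewrite (negbTE ji).
  have -> : [set v : 'I_n | (v != i) && ((if v == i then i else if v == j then i else j) == j)]
           = ~: [set i; j].
    apply/setP => v; rewrite !inE.
    have [vi|vi] := eqVneq v i; first by [].
    have [vj|vj] := eqVneq v j; first by rewrite eq_sym (negbTE ji).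
    by rewrite eqxx.
  by rewrite cardsCs setCK cards2 card_ord (_ : (i != j) = true) // eq_sym.
apply/eqP; rewrite cards_eq0; apply/eqP/setP => v; rewrite !inE.
have [vi|vi] := eqVneq v i; first by [].
have [ji|ji] := eqVneq j i; first by rewrite /= (negbTE ik).
have [vj|vj] := eqVneq v j; first by rewrite /= (negbTE ik).
by rewrite /= (negbTE jk).
Qed.

Lemma nch_eq {n} (k j : 'I_n) :
  nchildren k (Tr k j) k = if j == k then n.-1 else 1%N.
Proof.
rewrite /nchildren /Tr.
have [jk|jk] := eqVneq j k.
  subst j.
  have -> : [set v : 'I_n | (v != k) && ((if v == k then k else k) == k)] = [set~ k].
    by apply/setP => v; rewrite !inE; case: (v == k); rewrite //= eqxx.
  by rewrite cardsC1 card_ord.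
have -> : [set v : 'I_n | (v != k) && ((if v == k then k else if v == j then k else j) == k)] = [set j].
  apply/setP => v; rewrite !inE.
  have [vk|vk] := eqVneq v k.
    by subst v; rewrite eq_sym (negbTE jk).
  have [vj|vj] := eqVneq v j; first by rewrite eqxx.
  by rewrite /= (negbTE jk).
by rewrite cards1.
Qed.
Lemma uplink (R : realType) n (r : 'I_n -> 'I_n -> R) (Rt : 'I_n -> R)
  (hr : forall i j, 0 <= r i j) (hrow : forall i, \sum_(j < n) r i j = Rt i) (k : 'I_n) :
  \sum_(i < n) \sum_(j < n) r i j * (nchildren i (Tr i j) k)%:R
    <= Rt k + (n - 2)%:R * \sum_(i < n) r i k.
Proof.
rewrite (bigD1 k) //= [X in _ <= _ + _ * X](bigD1 k) //=.
have Hne : \sum_(i < n | i != k) \sum_(j < n) r i j * (nchildren i (Tr i j) k)%:R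
         = \sum_(i < n | i != k) r i k * (n - 2)%:R.
  apply: eq_bigr => i ik.
  rewrite (eq_bigr (fun j => if j == k then r i k * (n - 2)%:R else 0)); last first.
    move=> j _; rewrite nch_ne //; case: (eqVneq j k) => [->|_] //.
    by rewrite mulr0.
  by rewrite -big_mkcond big_pred1_eq.
have Hk : \sum_(j < n) r k j * (nchildren k (Tr k j) k)%:R
         = r k k * (n.-1)%:R + (Rt k - r k k).
  rewrite (bigD1 k) //= nch_eq eqxx; congr (_ + _).
  rewrite -(hrow k) [in RHS](bigD1 k) //= addrC addrK.
  by apply: eq_bigr => j jk; rewrite nch_eq (negbTE jk) mulr1.
rewrite Hne Hk -mulr_suml.
have hc : (n.-1)%:R - 1 <= (n - 2)%:R :> R.
  case: n {r hr hrow Hne Hk Rt} k => [|[|m]] _ //=.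
  - by rewrite sub0r lerN10.
  - by rewrite sub0r lerN10.
  - by rewrite subSS subn1 /= -addn1 natrD addrK.
have ha : r k k * ((n.-1)%:R - 1) <= r k k * (n - 2)%:R by apply: ler_wpM2l.
set a := r k k; set s := \sum_(i < n | i != k) r i k; set c := (n - 2)%:R in ha hc *.
set d := (n.-1)%:R in ha hc *.
have ha0 : 0 <= a := hr k k.
nra.
Qed.
Lemma finish (R : realType) (n : nat) (Cu Cd Rt : 'I_n -> R)
  (h2 : forall i, \sum_(j < n | j != i) Rt j <= Cd i)
  (r : 'I_n -> 'I_n -> R)
  (hr : forall i j, 0 <= r i j) (hrow : forall i, \sum_(j < n) r i j = Rt i)
  (hup : forall k, Rt k + (n - 2)%:R * \sum_(i < n) r i k <= Cu k) :
  exists (r : 'I_n -> 'I_n -> R) (T : 'I_n -> 'I_n -> 'I_n -> 'I_n),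
    (forall i j, 0 <= r i j) /\
    (forall i, \sum_(j < n) r i j = Rt i) /\
    (forall i j, rooted_spanning_tree i (T i j)) /\
    (forall k,
        \sum_(i < n) \sum_(j < n) r i j * (nchildren i (T i j) k)%:R <= Cu k /\
        \sum_(i < n | i != k) \sum_(j < n) r i j <= Cd k) /\
    (forall i j, height_le i (T i j) 2).
Proof.
exists r, Tr; split => //; split => //; split; first exact: Tr_tree.
split; last exact: Tr_height.
move=> k; split.
- exact: le_trans (@uplink _ _ r Rt hr hrow k) (hup k).
- by rewrite (eq_bigr _ (fun i _ => hrow i)).
Qed.

Lemma hn2_lem (R : realType) n (S C : R) :
  n.-1%:R * S <= C -> S <= C -> (n - 2)%:R * S <= C - S.
Proof.
case: n => [|[|m]] /= h3 hSC; rewrite ?mul0r ?subr_ge0 //.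
rewrite (_ : (m.+2 - 2 = m)%N); last by rewrite -addn2 addnK.
rewrite lerBrDr -{2}(mul1r S) -mulrDl natr1.
by [].
Qed.

Lemma hn2_lem2 (R : realType) n (S C : R) :
  n.-1%:R * S <= C -> C <= S -> 0 < S -> (n - 2)%:R = 0 :> R.
Proof.
case: n => [|[|[|m]]] //= h3 hCS hS.
have : (m.+2)%:R * S <= S by apply: le_trans hCS.
rewrite -subr_le0 -{2}(mul1r S) -mulrBl => H.
have : 0 < (m.+2)%:R - 1 :> R by rewrite -natr1 addrK ltr0Sn.
move=> H2; have := mulr_gt0 H2 hS; rewrite ltNge H //.
Qed.

Theorem theorem3p1 (R : realType) (n : nat) (hn : (0 < n)%N)
  (Cu Cd Rt : 'I_n -> R)
  (hCu : forall k, 0 < Cu k) (hCd : forall k, 0 < Cd k) (hR : forall i, 0 < Rt i)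
  (h1 : forall i, Rt i <= Cu i)
  (h2 : forall i, \sum_(j < n | j != i) Rt j <= Cd i)
  (h3 : (n.-1)%:R * \sum_(i < n) Rt i <= \sum_(i < n) Cu i) :
  exists (r : 'I_n -> 'I_n -> R) (T : 'I_n -> 'I_n -> 'I_n -> 'I_n),
    (forall i j, 0 <= r i j) /\
    (forall i, \sum_(j < n) r i j = Rt i) /\
    (forall i j, rooted_spanning_tree i (T i j)) /\
    (forall k,
        \sum_(i < n) \sum_(j < n) r i j * (nchildren i (T i j) k)%:R <= Cu k /\
        \sum_(i < n | i != k) \sum_(j < n) r i j <= Cd k) /\
    (forall i j, height_le i (T i j) 2).
Proof.
suff [r [hr [hrow hup]]] : exists r : 'I_n -> 'I_n -> R, (forall i j, 0 <= r i j) /\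
   (forall i, \sum_(j < n) r i j = Rt i) /\
   (forall k, Rt k + (n - 2)%:R * \sum_(i < n) r i k <= Cu k).
  exact: (@finish R n Cu Cd Rt h2 r hr hrow hup).
set C := \sum_(i < n) Cu i in h3 *; set S := \sum_(i < n) Rt i in h3 *.
have hS : 0 < S.
  rewrite /S (bigD1 (Ordinal hn)) //=.
  apply: lt_le_trans (hR (Ordinal hn)) _; rewrite lerDl; apply: sumr_ge0 => i _.
  exact: ltW.
have hSC : S <= C by apply: ler_sum => i _.
have [SC|CS] := ltP S C.
  pose b j := (Cu j - Rt j) / (C - S).
  have hCS : 0 < C - S by rewrite subr_gt0.
  have hb : forall j, 0 <= b j.
    by move=> j; apply: divr_ge0; [rewrite subr_ge0; exact: h1 | exact: ltW].
  have hbe : forall j, b j * (C - S) = Cu j - Rt j.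
    by move=> j; rewrite /b divfK // gt_eqF.
  have hn2 : (n - 2)%:R * S <= C - S by apply: hn2_lem.
  exists (fun i j => Rt i * b j); split.
    by move=> i j; apply: mulr_ge0; [exact: ltW | exact: hb].
  split.
    move=> i; rewrite -mulr_sumr.
    have -> : \sum_(j < n) b j = 1.
      rewrite /b -mulr_suml sumrB -/C -/S divff // gt_eqF //.
    by rewrite mulr1.
  move=> k; rewrite -mulr_suml -/S.
  have := hbe k; have := hb k; have := hn2; have := hS.
  set c := (n - 2)%:R; set bk := b k => *.
  nra.
pose r i j : R := if j == i then Rt i else 0.
have hn2 : (n - 2)%:R = 0 :> R by apply: (@hn2_lem2 R n S C).
exists r; split.
  by move=> i j; rewrite /r; case: (j == i) => //; exact: ltW.
split.
  by move=> i; rewrite /r -big_mkcond big_pred1_eq.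
by move=> k; rewrite hn2 mul0r addr0.
Qed.
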